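(* Let $S,T\subseteq\mathbb{Z}_{>0}$ be finite. Then $|T\triangleleft S|=|S|$ if and only if $T\preceq S$.
   Context: For a finite set $S\subseteq\mathbb{Z}_{>0}$, $S(i)$ denotes its $i$th smallest element. $T\preceq S$ means $|T|\ge|S|$ and $T(i)<S(i)$ for all $i\in[|S|]$. For finite $S,T$, $T\triangleleft S$ is computed by going through $S$ from largest to smallest; each $s$ picks the largest element of $T$ less than $s$ not yet picked (if one exists); $T\triangleleft S$ is the set of picked elements. *)

(* Defs.v *)
From mathcomp Require Import all_boot.
From mathcomp Require Import finmap.
Set Implicit Arguments. Unset Strict Implicit. Unset Printing Implicit Defensive.
Local Open Scope fset_scope.

(* S(i) (1-indexed i-th smallest element) is ith_smallest S (i-1), 0-indexed. *)
Definition ith_smallest (S : {fset nat}) (i : nat) : nat :=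
  nth 0 (sort leq S) i.

Definition preceq (T S : {fset nat}) : Prop :=
  (#|` S| <= #|` T|)%N /\
  forall i : nat, (i < #|` S|)%N -> (ith_smallest T i < ith_smallest S i)%N.

Definition pick_step (T : {fset nat}) (P : {fset nat}) (s : nat) : {fset nat} :=
  let C := [fset t in T | (t < s)%N && (t \notin P)] in
  if C == fset0 then P else P `|` [fset (\max_(t <- C) t)%N].

Definition triangleleft (T S : {fset nat}) : {fset nat} :=
  foldl (pick_step T) fset0 (sort geq S).

(* Main.v *)
Require Import Defs.
From mathcomp Require Import all_boot.
From mathcomp Require Import finmap.
From mathcomp Require Import zify.
Local Open Scope fset_scope.

Lemma count_sumE (p : pred nat) (s : seq nat) : count p s = (\sum_(i <- s) (p i : nat))%N.
Proof. by elim: s => [|a s IH]; rewrite ?big_nil ?big_cons //= IH. Qed.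

Lemma cnt_D1 (T : {fset nat}) a (p : pred nat) : a \in T ->
  count p T = (p a + count p (T `\ a))%N.
Proof. by move=> aT; rewrite !count_sumE (big_fsetD1 a). Qed.

Lemma max_in (s : seq nat) : s != [::] -> (\max_(t <- s) t)%N \in s.
Proof.
elim: s => [|a s IH] // _; rewrite big_cons.
case: s IH => [|b s] IH; first by rewrite big_nil maxn0 inE.
have /IH H : b :: s != [::] by [].
rewrite /maxn; case: ifP => _; last by rewrite inE eqxx.
by rewrite inE; apply/orP; right; exact: H.
Qed.

Lemma fmax_in (C : {fset nat}) : C != fset0 -> (\max_(t <- C) t)%N \in C.
Proof.
move=> H; apply: max_in; apply/eqP => E; move/negP: H; apply.
apply/eqP/fsetP => y; rewrite inE; apply/negbTE.
by rewrite -[y \in _]/(y \in (_ : seq nat)) E.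
Qed.

Lemma fold_split T P Q l :
  foldl (pick_step T) (P `|` Q) l = P `|` foldl (pick_step (T `\` P)) Q l.
Proof.
elim: l Q => [|a l IH] Q //=.
rewrite -IH; congr foldl; rewrite /pick_step.
have -> : [fset t in T | (t < a)%N && (t \notin P `|` Q)] =
          [fset t in T `\` P | (t < a)%N && (t \notin Q)].
  apply/fsetP => t; rewrite !inE.
  by case: (t \in P); case: (t \in Q); case: (t \in T); case: (t < a)%N.
by case: ifP => _ //; rewrite fsetUA.
Qed.

Lemma pick_sub T Q a : pick_step T Q a `<=` Q `|` T.
Proof.
rewrite /pick_step; case: ifP => H; first exact: fsubsetUl.
apply/fsubsetP => x; rewrite !inE => /orP [->//|/eqP ->].
have := @fmax_in [fset t in T | (t < a)%N && (t \notin Q)].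
by rewrite H => /(_ isT); rewrite !inE => /andP [->]; rewrite orbT.
Qed.

Lemma fold_sub T Q l : foldl (pick_step T) Q l `<=` Q `|` T.
Proof.
elim: l Q => [|a l IH] Q /=; first exact: fsubsetUl.
apply: fsubset_trans (IH _) _; rewrite fsubUset fsubsetUr andbT.
exact: pick_sub.
Qed.

Lemma fold_card T Q l : (#|` foldl (pick_step T) Q l| <= #|` Q| + size l)%N.
Proof.
elim: l Q => [|a l IH] Q /=; first by rewrite addn0.
apply: leq_trans (IH _) _; rewrite addnS -addSn leq_add2r.
rewrite /pick_step; case: ifP => _ //.
by rewrite fsetUC cardfsU1; case: (_ \notin _).
Qed.

Definition cnt (T : {fset nat}) s := count (fun t => (t < s)%N) T.
Definition QQ T (l : seq nat) := forall s, s \in l ->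
  (count (fun x => (x <= s)%N) l <= cnt T s)%N.

Lemma gtr : transitive geq.
Proof. by move=> a b c h1 h2; apply: leq_trans h2 h1. Qed.

Lemma mainI T l : sorted geq l -> uniq l ->
  (#|` foldl (pick_step T) fset0 l| = size l <-> QQ T l).
Proof.
elim: l T => [|m l IH] T Hs Hu.
  by split => // _ s; rewrite in_nil.
move: Hs; rewrite /= (path_sortedE gtr) => /andP [Hall Hs].
move: Hu => /= /andP [mnl Hu].
have Hlt : forall x, x \in l -> (x < m)%N.
  move=> x xl; rewrite ltn_neqAle (allP Hall x xl : (x <= m)%N) andbT.
  by apply/eqP => E; rewrite -E xl in mnl.
have cntl : forall s, s \in l -> count (fun x => (x <= s)%N) (m :: l) = count (fun x => (x <= s)%N) l.
  by move=> s sl /=; rewrite leqNgt Hlt.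
have cntm : count (fun x => (x <= m)%N) (m :: l) = (size l).+1.
  rewrite /= leqnn -(count_predT l); congr S; apply: eq_in_count => x xl.
  by by rewrite /= (ltnW (Hlt x xl)).
rewrite [pick_step T fset0 m]/pick_step.
set C := [fset t in T | (t < m)%N && (t \notin fset0)].
case: ifP => HC.
  split.
    move=> E; have := fold_card T fset0 l; rewrite E /= add0n ltnn //.
  move=> /(_ m (mem_head _ _)); rewrite cntm.
  suff -> : cnt T m = 0 by [].
  rewrite /cnt; apply/eqP; rewrite -leqn0 leqNgt -has_count; apply/hasP => [[t tT tm]].
  have : t \in C by rewrite !inE tm andbT; exact: tT.
  by rewrite (eqP HC) in_fset0.
set ts := (\max_(t <- C) t)%N.
have tsC : ts \in C by apply: fmax_in; rewrite HC.
move: (tsC); rewrite !inE => /andP [tsT /andP [tsm _]].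
have tsmax : forall t, t \in T -> (t < m)%N -> (t <= ts)%N.
  move=> t tT tm; rewrite /ts.
  have tC : t \in C by rewrite !inE tm andbT; exact: tT.
  by apply: (@leq_bigmax_seq _ (enum_fset C) xpredT (fun t => t) t).
rewrite -[fset0 `|` [fset ts]]fsetU0 fold_split fset0U cardfsU1.
have nin : ts \notin foldl (pick_step (T `\ ts)) fset0 l.
  apply/negP => /(fsubsetP (fold_sub _ _ _)); rewrite !inE.
  by rewrite eqxx.
rewrite nin /= add1n.
have cntD : forall s, cnt T s = ((ts < s)%N + cnt (T `\ ts) s)%N.
  by move=> s; rewrite /cnt (cnt_D1 T ts (fun t => (t < s)%N) tsT).
have E : QQ (T `\ ts) l <-> QQ T (m :: l).
  split.
    move=> Q' s; rewrite inE => /orP [/eqP -> | sl].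
      rewrite cntm (cntD m) tsm add1n ltnS.
      case El: l => [|m' l'] //.
      have m'l : m' \in l by rewrite El mem_head.
      have Hc : count (fun x => (x <= m')%N) l = size l.
        move: Hs; rewrite El /= (path_sortedE gtr) => /andP [Ha _].
        rewrite leqnn add1n; congr S; rewrite -(count_predT l').
        by apply: eq_in_count => x xl; rewrite /= (allP Ha x xl : (x <= m')%N).
      rewrite -El -Hc; apply: leq_trans (Q' m' m'l) _.
      apply: sub_count => x /= h; exact: ltn_trans h (Hlt m' m'l).
    rewrite cntl // (cntD s); apply: leq_trans (Q' s sl) _; exact: leq_addl.
  move=> Q s sl.
  have := Q s; rewrite inE sl orbT => /(_ isT); rewrite cntl // (cntD s).
  case: (ltnP ts s) => h //=.
  have cT : cnt T s = cnt T m.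
    apply: eq_in_count => t tT /=; apply/idP/idP => h'.
      exact: ltn_trans h' (Hlt s sl).
    exact: leq_ltn_trans (tsmax t tT h') h.
  have := Q m (mem_head _ _); rewrite cntm -cT (cntD s) h.
  have := count_size (fun x => (x <= s)%N) l.
  lia.
split.
  by move=> /succn_inj /(IH _ Hs Hu) /E.
by move=> /E /(IH _ Hs Hu) ->.
Qed.

Lemma count0 (u : seq nat) a x : (x <= a)%N -> all (ltn a) u ->
  count (fun t => (t < x)%N) u = 0.
Proof.
move=> h Ha; apply/eqP; rewrite -leqn0 leqNgt -has_count; apply/hasPn => y yu.
rewrite -leqNgt; exact: leq_trans h (ltnW (allP Ha y yu)).
Qed.

Lemma lemA (u : seq nat) j x : sorted ltn u -> (j < size u)%N ->
  (nth 0 u j < x)%N = (j < count (fun t => (t < x)%N) u)%N.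
Proof.
elim: u j => [|a u IH] j //= Hs Hj.
move: Hs; rewrite (path_sortedE ltn_trans) => /andP [Ha Hs].
case: j Hj => [|j] Hj /=.
  case: (ltnP a x) => h //=.
  by rewrite add0n (count0 _ _ _ h Ha).
have Hj' : (j < size u)%N by [].
case: (ltnP a x) => h /=.
  by rewrite (IH _ Hs Hj') add1n ltnS.
rewrite add0n (count0 _ _ _ h Ha) ltn0; apply/negbTE; rewrite -leqNgt.
exact: leq_trans h (ltnW (allP Ha _ (mem_nth 0 Hj'))).
Qed.

Lemma lemB (u : seq nat) i : sorted ltn u -> (i < size u)%N ->
  count (fun t => (t <= nth 0 u i)%N) u = i.+1.
Proof.
elim: u i => [|a u IH] i //= Hs Hi.
move: Hs; rewrite (path_sortedE ltn_trans) => /andP [Ha Hs].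
case: i Hi => [|i] Hi /=.
  rewrite leqnn; congr S; apply/eqP; rewrite -leqn0 leqNgt -has_count.
  apply/hasPn => y yu; rewrite -ltnNge; exact: (allP Ha y yu).
have Hi' : (i < size u)%N by [].
by rewrite (ltnW (allP Ha _ (mem_nth 0 Hi'))) (IH _ Hs Hi').
Qed.

Lemma sorted_ltn_sort (S : {fset nat}) : sorted ltn (sort leq S).
Proof.
by rewrite ltn_sorted_uniq_leq sort_uniq fset_uniq (sort_sorted leq_total).
Qed.

Theorem lemma4p7 (S T : {fset nat})
  (HS : forall s, s \in S -> (0 < s)%N)
  (HT : forall t, t \in T -> (0 < t)%N) :
  #|` triangleleft T S| = #|` S| <-> preceq T S.
Proof.
have geq_tot : total geq by move=> a b; exact: leq_total.
rewrite /triangleleft.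
have -> : #|` S| = size (sort geq S) by rewrite size_sort.
rewrite (mainI T (sort geq S) (sort_sorted geq_tot _)); last by rewrite sort_uniq fset_uniq.
set sL := sort leq S; set tL := sort leq T.
have HsL := sorted_ltn_sort S; have HtL := sorted_ltn_sort T.
have szS : #|` S| = size sL by rewrite size_sort.
have szT : #|` T| = size tL by rewrite size_sort.
have cntE : forall x, cnt T x = count (fun t => (t < x)%N) tL.
  by move=> x; rewrite /tL count_sort.
have QQE : QQ T (sort geq S) <-> forall i, (i < size sL)%N -> (i < cnt T (nth 0 sL i))%N.
  split.
    move=> Q i hi; have := Q (nth 0 sL i).
    rewrite mem_sort -(mem_sort leq) -/sL mem_nth // => /(_ isT).
    by rewrite count_sort -(count_sort leq) -/sL lemB.
  move=> H s; rewrite mem_sort -(mem_sort leq) -/sL => hs.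
  rewrite count_sort -(count_sort leq) -/sL.
  have hi : (index s sL < size sL)%N by rewrite index_mem.
  have h := H _ hi; rewrite nth_index // in h; by rewrite -{1}(nth_index 0 hs) lemB.
rewrite QQE /preceq /ith_smallest -/sL -/tL szS szT.
have cntsz : forall x, (cnt T x <= size tL)%N.
  by move=> x; rewrite cntE count_size.
split.
  move=> H.
  have hsz : (size sL <= size tL)%N.
    case E: (size sL) => [|k] //.
    have := H k; rewrite E ltnSn => /(_ isT) h.
    exact: leq_trans h (cntsz _).
  split => // i hi.
  by rewrite lemA //; [rewrite -cntE; exact: H | exact: leq_trans hi hsz].
move=> [hsz H] i hi.
by rewrite cntE -lemA //; [exact: H | exact: leq_trans hi hsz].
Qed.
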